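(* Let $A$ be a reachable $\mathbf{JSL}$-dfa. Then the transition semiring $\mathrm{ts}(A)$, viewed as a $\mathbf{JSL}$-dfa, satisfies $[\mathrm{ts}(A)]^{\mathsf{op}}\cong\mathrm{rqc}(A^{\mathsf{op}})$ as $\mathbf{JSL}$-dfas (equivalently, since both are simple, the states of $[\mathrm{ts}(A)]^{\mathsf{op}}$ accept exactly the languages that are states of $\mathrm{rqc}(A^{\mathsf{op}})$).
   Context: A $\mathbf{JSL}$-dfa $A=(S,\delta,s_0,F)$: finite semilattice $S$, join-preserving $\delta_a\colon S\to S$, initial state $s_0$, final states $F=\{s:s\not\le s_f\}$ for some $s_f$; $\delta_w=\delta_{a_n}\circ\cdots\circ\delta_{a_1}$ for $w=a_1\cdots a_n$; $L(A,s)=\{w:\delta_w(s)\in F\}$. $A$ is reachable if every state is a finite join of states $\delta_w(s_0)$; simple if distinct states accept distinct languages. Morphisms: join-preserving maps preserving transitions, initial state and final states (both ways). The dual $A^{\mathsf{op}}$ has reversed order, transitions $\delta_a^*(s)=$ largest $t$ with $\delta_a(t)\le s$, initial state the largest non-final state, final states $\{s:s_0\not\le s\}$. Transition semiring: $\mathrm{ts}(A)$ is the set of all maps $\bigvee_{i=1}^n\delta_{w_i}\colon S\to S$ ($n\ge0$, $w_i\in\Sigma^*$, join taken pointwise), ordered pointwise, viewed as a $\mathbf{JSL}$-dfa with initial state $\delta_\epsilon=\mathrm{id}_S$, transitions $\bigvee_i\delta_{w_i}\xrightarrow{a}\bigvee_i\delta_{w_ia}$, and final states those $\bigvee_i\delta_{w_i}$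 such that some $w_i$ is accepted by $A$. For a simple $\mathbf{JSL}$-dfa $B$, $\mathrm{rqc}(B)$ (right-derivative closure) is the $\mathbf{JSL}$-dfa whose states are the smallest set of languages containing all $L(B,s)$ and closed under finite unions and right derivatives $K\mapsto Kv^{-1}=\{w:wv\in K\}$, ordered by inclusion, with transitions $K\mapsto a^{-1}K$, initial state the language of $B$, final states those containing $\epsilon$. *)

(* Defs.v *)
From mathcomp Require Import all_boot.
From Stdlib Require Import ClassicalEpsilon.


Record jdfa (Sigma : Type) := JDfa {
  st : Type;
  le : st -> st -> Prop;
  jn : st -> st -> st;
  bot : st;
  delta : Sigma -> st -> st;
  init : st;
  fin : st -> Prop }.

Arguments st {Sigma} j.
Arguments le {Sigma} j _ _.
Arguments jn {Sigma} j _ _.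
Arguments bot {Sigma} j.
Arguments delta {Sigma} j _ _.
Arguments init {Sigma} j.
Arguments fin {Sigma} j _.

Section JSL.
Context {Sigma : Type}.
Implicit Types A B : jdfa Sigma.

Definition deltaw A (w : seq Sigma) (s : st A) : st A :=
  foldl (fun t a => delta A a t) s w.

Definition lang_of A (s : st A) : seq Sigma -> Prop :=
  fun w => fin A (deltaw A w s).

Definition bigjn A (l : seq (st A)) : st A := foldr (jn A) (bot A) l.

Record is_jsl_dfa A : Prop := {
  jsl_finite : exists l : seq (st A), forall x, List.In x l;
  jsl_refl : forall x, le A x x;
  jsl_antisym : forall x y, le A x y -> le A y x -> x = y;
  jsl_trans : forall x y z, le A x y -> le A y z -> le A x z;
  jsl_jn_ubl : forall x y, le A x (jn A x y);
  jsl_jn_ubr : forall x y, le A y (jn A x y);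
  jsl_jn_least : forall x y z, le A x z -> le A y z -> le A (jn A x y) z;
  jsl_bot_least : forall x, le A (bot A) x;
  jsl_delta_jn : forall a x y, delta A a (jn A x y) = jn A (delta A a x) (delta A a y);
  jsl_delta_bot : forall a, delta A a (bot A) = bot A;
  jsl_final : exists sf, forall s, fin A s <-> ~ le A s sf }.

Definition reachable A : Prop :=
  forall s, exists ws : seq (seq Sigma),
    s = bigjn A (map (fun w => deltaw A w (init A)) ws).

(* the greatest element satisfying P (chosen classically; d is a default) *)
Definition greatest {T : Type} (d : T) (leT : T -> T -> Prop) (P : T -> Prop) : T :=
  epsilon (inhabits d) (fun z => P z /\ forall t, P t -> leT t z).

(* The dual A^op: reversed order (so its join is the meet of A, its bottom
   the top of A), delta*_a(s) = largest t with delta_a t <= s, initial state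
   the largest non-final state, final states {s | s_0 not <= s}. *)
Definition dual A : jdfa Sigma :=
  @JDfa Sigma (st A)
    (fun x y => le A y x)
    (fun x y => greatest (init A) (le A) (fun z => le A z x /\ le A z y))
    (greatest (init A) (le A) (fun _ => True))
    (fun a s => greatest (init A) (le A) (fun t => le A (delta A a t) s))
    (greatest (init A) (le A) (fun t => ~ fin A t))
    (fun s => ~ le A (init A) s).

Definition fjoin A (ws : seq (seq Sigma)) : st A -> st A :=
  fun s => bigjn A (map (fun w => deltaw A w s) ws).

Definition ts_st A := { g : st A -> st A | exists ws, g = fjoin A ws }.

Definition ts_val A (g : ts_st A) : st A -> st A := proj1_sig g.

Definition ts_bot A : ts_st A :=
  exist (fun g => exists ws, g = fjoin A ws) (fun _ => bot A) (ex_intro _ [::] erefl).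

Definition ts_pick A (f : st A -> st A) : ts_st A :=
  epsilon (inhabits (ts_bot A)) (fun k => ts_val A k = f).

Definition ts A : jdfa Sigma :=
  @JDfa Sigma (ts_st A)
    (fun g h => forall s, le A (ts_val A g s) (ts_val A h s))
    (fun g h => ts_pick A (fun s => jn A (ts_val A g s) (ts_val A h s)))
    (ts_bot A)
    (* \/_i delta_{w_i}  --a-->  \/_i delta_{w_i a} *)
    (fun a g => epsilon (inhabits (ts_bot A)) (fun k =>
        exists ws, ts_val A g = fjoin A ws /\
                   ts_val A k = fjoin A [seq rcons w a | w <- ws]))
    (ts_pick A id)
    (fun g => exists ws, ts_val A g = fjoin A ws /\
                exists2 w, List.In w ws & lang_of A (init A) w).

Definition lang := seq Sigma -> Prop.

Inductive rqc_set B : lang -> Prop :=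
| rqc_base s : rqc_set B (lang_of B s)
| rqc_empty : rqc_set B (fun _ => False)
| rqc_union K1 K2 : rqc_set B K1 -> rqc_set B K2 ->
    rqc_set B (fun w => K1 w \/ K2 w)
| rqc_rder K (v : seq Sigma) : rqc_set B K -> rqc_set B (fun w => K (w ++ v)).

Definition rqc_st B := { K : lang | rqc_set B K }.

Definition rqc_val B (K : rqc_st B) : lang := proj1_sig K.

Definition rqc_bot B : rqc_st B := exist (rqc_set B) (fun _ => False) (rqc_empty B).

Definition rqc_pick B (K : lang) : rqc_st B :=
  epsilon (inhabits (rqc_bot B)) (fun k => rqc_val B k = K).

Definition rqc B : jdfa Sigma :=
  @JDfa Sigma (rqc_st B)
    (fun K1 K2 => forall w, rqc_val B K1 w -> rqc_val B K2 w)
    (fun K1 K2 => rqc_pick B (fun w => rqc_val B K1 w \/ rqc_val B K2 w))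
    (rqc_bot B)
    (fun a K => rqc_pick B (fun w => rqc_val B K (a :: w)))
    (exist (rqc_set B) (lang_of B (init B)) (rqc_base B (init B)))
    (fun K => rqc_val B K [::]).

Definition jdfa_morph A B (f : st A -> st B) : Prop :=
  (forall x y, f (jn A x y) = jn B (f x) (f y)) /\
  f (bot A) = bot B /\
  (forall a x, f (delta A a x) = delta B a (f x)) /\
  f (init A) = init B /\
  (forall x, fin A x <-> fin B (f x)).

Definition jdfa_iso A B : Prop :=
  exists (f : st A -> st B) (g : st B -> st A),
    jdfa_morph A B f /\ jdfa_morph B A g /\ cancel f g /\ cancel g f.

End JSL.

(* Main.v *)
Require Import Defs.
From mathcomp Require Import all_boot.
From Stdlib Require Import ClassicalEpsilon Classical FunctionalExtensionality PropExtensionality ProofIrrelevance.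
From Stdlib Require List.
Arguments jsl_finite {Sigma A} _.
Arguments jsl_refl {Sigma A} _.
Arguments jsl_antisym {Sigma A} _.
Arguments jsl_trans {Sigma A} _.
Arguments jsl_jn_ubl {Sigma A} _.
Arguments jsl_jn_ubr {Sigma A} _.
Arguments jsl_jn_least {Sigma A} _.
Arguments jsl_bot_least {Sigma A} _.
Arguments jsl_delta_jn {Sigma A} _.
Arguments jsl_delta_bot {Sigma A} _.
Arguments jsl_final {Sigma A} _.

Section Gen.
Context {Sigma : Type} (B : jdfa Sigma) (HB : is_jsl_dfa B).

Lemma bigjn_ub l x : List.In x l -> le B x (bigjn B l).
Proof.
elim: l => [|a l IH] //= [<-|H]; first exact: jsl_jn_ubl.
apply: jsl_trans HB _ _ _ (IH H) _; exact: jsl_jn_ubr.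
Qed.

Lemma bigjn_least l c : (forall x, List.In x l -> le B x c) -> le B (bigjn B l) c.
Proof.
elim: l => [|a l IH] /= H; first exact: jsl_bot_least.
apply: jsl_jn_least HB _ _ _ (H a (or_introl erefl)) _.
apply: IH => x Hx; exact: H x (or_intror Hx).
Qed.

Lemma delta_mono a x y : le B x y -> le B (delta B a x) (delta B a y).
Proof.
move=> Hxy.
have E : y = jn B x y.
  apply: (jsl_antisym HB); first exact: jsl_jn_ubr.
  exact: jsl_jn_least HB _ _ _ Hxy (jsl_refl HB _).
rewrite E (jsl_delta_jn HB); exact: jsl_jn_ubl.
Qed.

Lemma deltaw_mono v x y : le B x y -> le B (deltaw B v x) (deltaw B v y).
Proof. elim: v x y => [|a v IH] x y H //=; apply: IH; exact: delta_mono. Qed.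

Lemma delta_bigjn a l : delta B a (bigjn B l) = bigjn B (map (delta B a) l).
Proof.
elim: l => [|x l IH] /=; first exact: jsl_delta_bot.
by rewrite (jsl_delta_jn HB) IH.
Qed.

Lemma deltaw_bigjn v l : deltaw B v (bigjn B l) = bigjn B (map (deltaw B v) l).
Proof.
elim: v l => [|a v IH] l /=; first by elim: l => //= x l <-.
rewrite -/(deltaw B v _) delta_bigjn IH -map_comp //.
Qed.

Lemma deltaw_rcons v a s : deltaw B (rcons v a) s = delta B a (deltaw B v s).
Proof. by rewrite /deltaw foldl_rcons. Qed.

Lemma deltaw_cat u v s : deltaw B (u ++ v) s = deltaw B v (deltaw B u s).
Proof. by rewrite /deltaw foldl_cat. Qed.

End Gen.

Lemma ex_greatest {X : Type} (le : X -> X -> Prop) (jn : X -> X -> X) (b : X)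
  (l : seq X) (Hl : forall x, List.In x l)
  (Htr : forall x y z, le x y -> le y z -> le x z)
  (Hl1 : forall x y, le x (jn x y)) (Hr1 : forall x y, le y (jn x y))
  (P : X -> Prop) : P b -> (forall x y, P x -> P y -> P (jn x y)) ->
  exists z, P z /\ forall t, P t -> le t z.
Proof.
move=> Pb Pj.
suff [z [Pz Hz]] : exists z, P z /\ forall t, List.In t l -> P t -> le t z.
  by exists z; split => // t; apply: Hz.
elim: l {Hl} => [|x l [z [Pz Hz]]]; first by exists b.
case: (classic (P x)) => Px.
  exists (jn x z); split; first exact: Pj.
  move=> t [<-|Ht] Pt; first exact: Hl1.
  apply: Htr (Hz t Ht Pt) _; exact: Hr1.
exists z; split => // t [<-|Ht] Pt //; exact: Hz.
Qed.

Lemma greatest_spec {T : Type} (d : T) (leT : T -> T -> Prop) (P : T -> Prop) :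
  (exists z, P z /\ forall t, P t -> leT t z) ->
  P (greatest d leT P) /\ forall t, P t -> leT t (greatest d leT P).
Proof. move=> H; unfold greatest; apply epsilon_spec; exact H. Qed.
Section Dual.
Context {Sigma : Type} (B : jdfa Sigma) (HB : is_jsl_dfa B).

Lemma jsl_greatest (P : st B -> Prop) : P (bot B) -> (forall x y, P x -> P y -> P (jn B x y)) ->
  exists z, P z /\ forall t, P t -> le B t z.
Proof.
have [l Hl] := jsl_finite HB.
apply: (ex_greatest (le B) (jn B) (bot B) l Hl).
- exact: jsl_trans.
- exact: jsl_jn_ubl.
- exact: jsl_jn_ubr.
Qed.

Lemma gspec (P : st B -> Prop) : P (bot B) -> (forall x y, P x -> P y -> P (jn B x y)) ->
  P (greatest (init B) (le B) P) /\ forall t, P t -> le B t (greatest (init B) (le B) P).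
Proof. move=> H1 H2; apply: greatest_spec; exact: jsl_greatest. Qed.

Lemma dual_meet x y t : le B t (jn (dual B) x y) <-> le B t x /\ le B t y.
Proof.
have [[H1 H2] H3] := gspec (fun z => le B z x /\ le B z y)
  (conj (jsl_bot_least HB _) (jsl_bot_least HB _))
  (fun u v Hu Hv => conj (jsl_jn_least HB _ _ _ Hu.1 Hv.1) (jsl_jn_least HB _ _ _ Hu.2 Hv.2)).
rewrite /=; split; last exact: H3.
move=> Ht; split; [exact: jsl_trans HB _ _ _ Ht H1|exact: jsl_trans HB _ _ _ Ht H2].
Qed.

Lemma dual_top t : le B t (bot (dual B)).
Proof.
have [_ H] := gspec (fun _ => True) I (fun _ _ _ _ => I).
exact: H.
Qed.

Lemma dual_delta a s t : le B t (delta (dual B) a s) <-> le B (delta B a t) s.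
Proof.
have [H1 H2] := gspec (fun t => le B (delta B a t) s)
  (eq_ind_r (fun u => le B u s) (jsl_bot_least HB s) (jsl_delta_bot HB a))
  (fun u v Hu Hv => eq_ind_r (fun w => le B w s) (jsl_jn_least HB _ _ _ Hu Hv) (jsl_delta_jn HB a u v)).
rewrite /=; split; last exact: H2.
move=> Ht; apply: jsl_trans HB _ _ _ _ H1; exact: delta_mono.
Qed.

Lemma dual_init t : le B t (init (dual B)) <-> ~ fin B t.
Proof.
have [sf Hsf] := jsl_final HB.
have [H1 H2] : (fun t => ~ fin B t) (greatest (init B) (le B) (fun t => ~ fin B t)) /\
   forall t, ~ fin B t -> le B t (greatest (init B) (le B) (fun t => ~ fin B t)).
  apply: greatest_spec; exists sf; split.
    by rewrite Hsf => /(_ (jsl_refl HB sf)).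
  move=> u Hu; apply: NNPP => Hn; apply: Hu; exact/Hsf.
rewrite /=; split; last exact: H2.
move=> Ht Hf; apply: (proj1 (Hsf t) Hf).
apply: jsl_trans HB _ _ _ Ht _.
apply: NNPP => Hn; apply: H1; exact/Hsf.
Qed.

Lemma dual_galois w s t : le B t (deltaw (dual B) w s) <-> le B (deltaw B (rev w) t) s.
Proof.
elim: w s t => [|a w IH] s t //=.
rewrite -/(deltaw (dual B) w _) IH rev_cons deltaw_rcons.
exact: dual_delta.
Qed.

Lemma dual_lang w s : lang_of (dual B) s w <-> ~ le B (deltaw B (rev w) (init B)) s.
Proof. rewrite /lang_of /= -dual_galois //. Qed.

End Dual.
Lemma in_seqmap {X Y : Type} (f : X -> Y) (l : seq X) y :
  List.In y (map f l) <-> exists x, f x = y /\ List.In x l.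
Proof.
elim: l => [|a l IH] /=; first by split=> // [[x []]].
split.
  case=> [<-|/IH [x [Hx Hl]]]; first by exists a; split=> //; left.
  by exists x; split=> //; right.
case=> x [Hx [Ha|Hl]]; first by left; rewrite Ha.
by right; apply/IH; exists x.
Qed.

Lemma map_eq_in {X Y : Type} (f h : X -> Y) (l : seq X) s :
  map f l = map h l -> List.In s l -> f s = h s.
Proof.
elim: l => [|a l IH] //= [E1 E2] [<-|Hs] //; exact: IH.
Qed.

Fixpoint allseqs {X : Type} (l : seq X) n : seq (seq X) :=
  if n is n'.+1 then List.flat_map (fun x => List.map (cons x) (allseqs l n')) l
  else [:: [::]].

Lemma allseqs_in {X : Type} (l : seq X) (Hl : forall x, List.In x l) r :
  List.In r (allseqs l (size r)).
Proof.
elim: r => [|x r IH] /=; first by left.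
apply/List.in_flat_map; exists x; split=> //; exact: List.in_map.
Qed.

Section TS.
Context {Sigma : Type} (A : jdfa Sigma) (HA : is_jsl_dfa A).

Lemma ts_eq (g h : ts_st A) : ts_val A g = ts_val A h -> g = h.
Proof.
case: g => f Hf; case: h => f' Hf' /= E; subst f'; f_equal; apply: proof_irrelevance.
Qed.

Lemma bigjn_cat l1 l2 : bigjn A (l1 ++ l2) = jn A (bigjn A l1) (bigjn A l2).
Proof.
apply: (jsl_antisym HA).
  apply: (bigjn_least A HA) => x Hx; case: (List.in_app_or _ _ _ Hx) => {}Hx.
    apply: jsl_trans HA _ _ _ (bigjn_ub A HA _ _ Hx) _; exact: jsl_jn_ubl.
  apply: jsl_trans HA _ _ _ (bigjn_ub A HA _ _ Hx) _; exact: jsl_jn_ubr.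
apply: (jsl_jn_least HA); apply: (bigjn_least A HA) => x Hx; apply: (bigjn_ub A HA);
  apply: List.in_or_app; tauto.
Qed.

Lemma fjoin_cat ws1 ws2 s : fjoin A (ws1 ++ ws2) s = jn A (fjoin A ws1 s) (fjoin A ws2 s).
Proof. by rewrite /fjoin map_cat bigjn_cat. Qed.

Lemma ts_pick_spec f : (exists k, ts_val A k = f) -> ts_val A (ts_pick A f) = f.
Proof. move=> H; unfold ts_pick; apply epsilon_spec; exact H. Qed.

Lemma ts_val_jn g h : ts_val A (jn (ts A) g h) = fun s => jn A (ts_val A g s) (ts_val A h s).
Proof.
apply: ts_pick_spec.
case: g => f1 [ws1 E1]; case: h => f2 [ws2 E2] /=.
have E : (fun s => jn A (f1 s) (f2 s)) = fjoin A (ws1 ++ ws2).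
  by apply: functional_extensionality => s; rewrite fjoin_cat E1 E2.
by exists (exist (fun g => exists ws, g = fjoin A ws) _ (ex_intro _ _ E)).
Qed.

Lemma ts_val_init : ts_val A (init (ts A)) = id.
Proof.
apply: ts_pick_spec.
have E : (@id (st A)) = fjoin A [:: [::]].
  apply: functional_extensionality => s; rewrite /fjoin /=.
  apply: (jsl_antisym HA); first exact: jsl_jn_ubl.
  exact: jsl_jn_least HA _ _ _ (jsl_refl HA _) (jsl_bot_least HA _).
by exists (exist (fun g => exists ws, g = fjoin A ws) _ (ex_intro _ _ E)).
Qed.

Lemma ts_val_delta a g : ts_val A (delta (ts A) a g) = fun s => delta A a (ts_val A g s).
Proof.
set P := fun k => exists ws, ts_val A g = fjoin A ws /\
                   ts_val A k = fjoin A [seq rcons w a | w <- ws].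
have : P (delta (ts A) a g).
  rewrite /=; apply: epsilon_spec.
  case: g {P} => f [ws E].
  by exists (exist (fun g => exists ws, g = fjoin A ws) _ (ex_intro _ [seq rcons w a | w <- ws] erefl)); exists ws.
case=> ws [E1 E2]; rewrite E2 E1; apply: functional_extensionality => s.
rewrite /fjoin (delta_bigjn A HA) -map_comp; congr bigjn.
rewrite -map_comp; apply: eq_map => w /=; exact: deltaw_rcons.
Qed.

Lemma fin_ts g : fin (ts A) g <-> fin A (ts_val A g (init A)).
Proof.
have [sf Hsf] := jsl_final HA.
split.
  case=> ws [E [w Hw Hl]].
  move: Hl; rewrite /lang_of !Hsf => Hl H; apply: Hl.
  apply: jsl_trans HA _ _ _ _ H; rewrite E; apply: (bigjn_ub A HA).
  by apply/in_seqmap; exists w.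
case: g => f [ws E] /= Hf; exists ws; split=> //.
apply: NNPP => Hn; move/Hsf: Hf; apply; rewrite E.
apply: (bigjn_least A HA) => x /in_seqmap [w [<- Hw]].
apply: NNPP => Hx; apply: Hn; exists w => //; exact/Hsf.
Qed.

Lemma ts_deltaw v g : ts_val A (deltaw (ts A) v g) = fun s => deltaw A v (ts_val A g s).
Proof.
elim: v g => [|a v IH] g //=.
rewrite -/(deltaw (ts A) v _) IH ts_val_delta //.
Qed.

Lemma ts_finite : exists LT : seq (st (ts A)), forall g, List.In g LT.
Proof.
have [l Hl] := jsl_finite HA.
exists (List.map (fun r => epsilon (inhabits (ts_bot A)) (fun g : ts_st A => map (ts_val A g) l = r))
  (allseqs l (size l))).
move=> g; apply/List.in_map_iff; exists (map (ts_val A g) l); split.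
  apply: ts_eq; apply: functional_extensionality => s.
  apply: (map_eq_in _ _ l) (Hl s).
  by apply: (epsilon_spec (inhabits (ts_bot A)) (fun g0 : ts_st A => map (ts_val A g0) l = _)); exists g.
by rewrite -{1}(size_map (ts_val A g) l); apply: allseqs_in.
Qed.

Lemma ts_trans (x y z : st (ts A)) : le (ts A) x y -> le (ts A) y z -> le (ts A) x z.
Proof. move=> H1 H2 s; exact: jsl_trans HA _ _ _ (H1 s) (H2 s). Qed.

Lemma ts_ubl (x y : st (ts A)) : le (ts A) x (jn (ts A) x y).
Proof. move=> s; rewrite ts_val_jn; exact: jsl_jn_ubl. Qed.

Lemma ts_ubr (x y : st (ts A)) : le (ts A) y (jn (ts A) x y).
Proof. move=> s; rewrite ts_val_jn; exact: jsl_jn_ubr. Qed.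

Lemma ts_jsl : is_jsl_dfa (ts A).
Proof.
split.
- exact: ts_finite.
- move=> x s; exact: jsl_refl.
- move=> x y H1 H2; apply: ts_eq; apply: functional_extensionality => s.
  exact: jsl_antisym HA _ _ (H1 s) (H2 s).
- exact: ts_trans.
- exact: ts_ubl.
- exact: ts_ubr.
- move=> x y z H1 H2 s; rewrite ts_val_jn; exact: jsl_jn_least HA _ _ _ (H1 s) (H2 s).
- move=> x s; exact: jsl_bot_least.
- move=> a x y; apply: ts_eq; rewrite ts_val_delta !ts_val_jn !ts_val_delta.
  apply: functional_extensionality => s; exact: jsl_delta_jn.
- move=> a; apply: ts_eq; rewrite ts_val_delta; apply: functional_extensionality => s.
  exact: jsl_delta_bot.
- have [sf Hsf] := jsl_final HA.
  have [l Hl] := ts_finite.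
  have [z [Pz Hz]] := ex_greatest (le (ts A)) (jn (ts A)) (bot (ts A)) l Hl ts_trans ts_ubl ts_ubr
    (fun g => le A (ts_val A g (init A)) sf) (jsl_bot_least HA _)
    (fun x y Hx Hy => eq_ind_r (fun u => le A (u (init A)) sf) (jsl_jn_least HA _ _ _ Hx Hy) (ts_val_jn x y)).
  exists z => g; rewrite fin_ts Hsf; split.
    by move=> H1 H2; apply: H1; exact: jsl_trans HA _ _ _ (H2 _) Pz.
  by move=> H1 H2; apply: H1; exact: Hz.
Qed.

End TS.
Lemma morph_inv {Sigma : Type} (A B : jdfa Sigma) (f : st A -> st B) (g : st B -> st A) :
  jdfa_morph A B f -> cancel f g -> cancel g f -> jdfa_morph B A g.
Proof.
move=> [Hj [Hb [Hd [Hi Hf]]]] fK gK; split; last split; last split; last split.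
- by move=> x y; rewrite -{1}(gK x) -{1}(gK y) -Hj fK.
- by rewrite -Hb fK.
- by move=> a x; rewrite -{1}(gK x) -Hd fK.
- by rewrite -Hi fK.
- by move=> x; rewrite Hf gK.
Qed.

Lemma lang_ext {Sigma : Type} (K K' : seq Sigma -> Prop) : (forall w, K w <-> K' w) -> K = K'.
Proof.
move=> H; apply: functional_extensionality => w; apply: propositional_extensionality; exact: H.
Qed.

Lemma rqc_ext {Sigma : Type} (B : jdfa Sigma) K K' : rqc_set B K -> (forall w, K w <-> K' w) -> rqc_set B K'.
Proof. by move=> HK /lang_ext <-. Qed.

Lemma rqc_eq {Sigma : Type} (B : jdfa Sigma) (k1 k2 : rqc_st B) : rqc_val B k1 = rqc_val B k2 -> k1 = k2.
Proof.
case: k1 => f Hf; case: k2 => f' Hf' /= E; subst f'; f_equal; apply: proof_irrelevance.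
Qed.

Lemma rqc_pick_val {Sigma : Type} (B : jdfa Sigma) (k : rqc_st B) : rqc_pick B (rqc_val B k) = k.
Proof.
apply: rqc_eq; unfold rqc_pick.
apply (epsilon_spec (inhabits (rqc_bot B)) (fun k0 => rqc_val B k0 = rqc_val B k)).
by exists k.
Qed.

Section Main.
Context {Sigma : Type} (A : jdfa Sigma) (HA : is_jsl_dfa A) (HR : reachable A).

Let HT := ts_jsl A HA.

Definition Phi (x : st (ts A)) : seq Sigma -> Prop := lang_of (dual (ts A)) x.

Lemma val_dv v : ts_val A (deltaw (ts A) v (init (ts A))) = deltaw A v.
Proof. by rewrite (ts_deltaw A HA) (ts_val_init A HA). Qed.

Lemma Phi_char x w : Phi x w <-> ~ (forall s, le A (deltaw A (rev w) s) (ts_val A x s)).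
Proof.
rewrite /Phi (dual_lang _ HT) /=.
by rewrite val_dv.
Qed.

Lemma le_dv v x : le (ts A) (deltaw (ts A) v (init (ts A))) x <->
  forall s, le A (deltaw A v s) (ts_val A x s).
Proof. by rewrite /= val_dv. Qed.

Lemma Phi_ext x y : (forall w, Phi x w <-> Phi y w) -> x = y.
Proof.
move=> H.
have H' : forall v, (forall s, le A (deltaw A v s) (ts_val A x s)) ->
                    (forall s, le A (deltaw A v s) (ts_val A y s)).
  move=> v Hv; apply: NNPP => Hn.
  have := proj2 (Phi_char y (rev v)); rewrite revK => /(_ Hn) /H /Phi_char.
  by rewrite revK.
have H'' : forall v, (forall s, le A (deltaw A v s) (ts_val A y s)) ->
                    (forall s, le A (deltaw A v s) (ts_val A x s)).
  move=> v Hv; apply: NNPP => Hn.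
  have := proj2 (Phi_char x (rev v)); rewrite revK => /(_ Hn) /H /Phi_char.
  by rewrite revK.
have gen : forall x y : st (ts A), (forall v, (forall s, le A (deltaw A v s) (ts_val A x s)) ->
                    (forall s, le A (deltaw A v s) (ts_val A y s))) -> le (ts A) x y.
  move=> [f [ws E]] z Hv s /=; rewrite E.
  apply: (bigjn_least A HA) => t /in_seqmap [w [<- Hw]].
  apply: Hv => s'; rewrite /= E; apply: (bigjn_ub A HA); apply/in_seqmap; by exists w.
apply: (jsl_antisym HT); exact: gen.
Qed.

Lemma Phi_meet x y w : Phi (jn (dual (ts A)) x y) w <-> Phi x w \/ Phi y w.
Proof.
rewrite /Phi !(dual_lang _ HT) (dual_meet _ HT).
split.
  move=> H; apply: NNPP => Hn; apply: H; split; apply: NNPP => H'; apply: Hn; by [left|right].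
by case=> H [H1 H2].
Qed.

Lemma Phi_bot w : Phi (bot (dual (ts A))) w <-> False.
Proof.
rewrite /Phi (dual_lang _ HT); split=> // H; apply: H; exact: (dual_top _ HT).
Qed.

Lemma Phi_init w : Phi (init (dual (ts A))) w <-> lang_of (dual A) (init (dual A)) w.
Proof.
rewrite /Phi !(dual_lang _ HT) (dual_lang _ HA) (dual_init _ HT) (dual_init _ HA) (fin_ts A HA) val_dv.
by [].
Qed.

Lemma Phi_rqc x : rqc_set (dual A) (Phi x).
Proof.
have [l Hl] := jsl_finite HA.
have key : forall l' : seq (st A), exists K, rqc_set (dual A) K /\ forall w,
    K w <-> exists s, List.In s l' /\ ~ le A (deltaw A (rev w) s) (ts_val A x s).
  elim=> [|s l' [K [HK HKw]]].
    exists (fun _ => False); split; first exact: rqc_empty.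
    by move=> w; split=> // [[s []]].
  have [ws Ews] := HR s.
  have key2 : forall ws' : seq (seq Sigma), exists K', rqc_set (dual A) K' /\ forall w,
      K' w <-> exists u, List.In u ws' /\ ~ le A (deltaw A (rev w) (deltaw A u (init A))) (ts_val A x s).
    elim=> [|u ws' [K' [HK' HK'w]]].
      exists (fun _ => False); split; first exact: rqc_empty.
      by move=> w; split=> // [[u []]].
    exists (fun w => lang_of (dual A) (ts_val A x s) (w ++ rev u) \/ K' w); split.
      apply: rqc_union => //; exact: (rqc_rder _ _ _ (rqc_base _ _)).
    move=> w; rewrite (dual_lang _ HA) HK'w rev_cat revK (deltaw_cat A).
    split.
      case=> [H|[u' [Hu' H]]]; first by exists u; split=> //; left.
      by exists u'; split=> //; right.
    case=> u' [[<-|Hu'] H]; first by left.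
    by right; exists u'.
  have [K' [HK' HK'w]] := key2 ws.
  exists (fun w => K' w \/ K w); split; first exact: rqc_union.
  move=> w; rewrite HK'w HKw.
  have eqv : ~ le A (deltaw A (rev w) s) (ts_val A x s) <->
     exists u, List.In u ws /\ ~ le A (deltaw A (rev w) (deltaw A u (init A))) (ts_val A x s).
    rewrite {1}Ews (deltaw_bigjn A HA); split.
      move=> H; apply: NNPP => Hn; apply: H; apply: (bigjn_least A HA) => t /in_seqmap [t' [<- /in_seqmap [u [<- Hu]]]].
      apply: NNPP => Ht; apply: Hn; by exists u.
    case=> u [Hu H] H'; apply: H; apply: jsl_trans HA _ _ _ _ H'; apply: (bigjn_ub A HA).
    apply/in_seqmap; exists (deltaw A u (init A)); split=> //; apply/in_seqmap; by exists u.
  rewrite -eqv; split.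
    case=> [H|[s' [Hs' H]]]; first by exists s; split=> //; left.
    by exists s'; split=> //; right.
  case=> s' [[<-|Hs'] H]; first by left.
  by right; exists s'.
have [K [HK HKw]] := key l.
apply: rqc_ext HK _ => w; rewrite HKw Phi_char; split.
  by case=> s [_ H] H'; apply: H.
move=> H; apply: NNPP => Hn; apply: H => s; apply: NNPP => Hs; apply: Hn; exists s; by split.
Qed.

Lemma Phi_surj K : rqc_set (dual A) K -> exists x, forall w, Phi x w <-> K w.
Proof.
elim=> [s| |K1 K2 _ [x1 H1] _ [x2 H2]|K0 v _ [x Hx]].
- set P := fun g : st (ts A) => le A (ts_val A g (init A)) s.
  have [Px Hx] := gspec _ HT P (jsl_bot_least HA _)
    (fun x y Hx Hy => eq_ind_r (fun u => le A (u (init A)) s) (jsl_jn_least HA _ _ _ Hx Hy) (ts_val_jn A HA x y)).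
  exists (greatest (init (ts A)) (le (ts A)) P) => w.
  rewrite Phi_char (dual_lang _ HA); split=> H H'; apply: H.
    apply: (le_dv (rev w) _).1; apply: Hx.
    by rewrite /P val_dv.
  exact: jsl_trans HA _ _ _ (H' _) Px.
- exists (bot (dual (ts A))) => w; rewrite Phi_bot; by [].
- exists (jn (dual (ts A)) x1 x2) => w; rewrite Phi_meet H1 H2; by [].
- set P := fun g : st (ts A) => forall s, le A (ts_val A g (deltaw A (rev v) s)) (ts_val A x s).
  have [Px Hx'] := gspec _ HT P (fun s => jsl_bot_least HA _)
    (fun g h Hg Hh s => eq_ind_r (fun u => le A (u (deltaw A (rev v) s)) (ts_val A x s)) (jsl_jn_least HA _ _ _ (Hg s) (Hh s)) (ts_val_jn A HA g h)).
  exists (greatest (init (ts A)) (le (ts A)) P) => w.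
  rewrite -Hx !Phi_char rev_cat; split=> H H'; apply: H.
    apply: (le_dv (rev w) _).1; apply: Hx'.
    by rewrite /P val_dv => s; rewrite -(deltaw_cat A); apply: H'.
  move=> s; rewrite (deltaw_cat A).
  exact: jsl_trans HA _ _ _ (H' _) (Px s).
Qed.

Definition fwd (x : st (dual (ts A))) : st (rqc (dual A)) :=
  exist (rqc_set (dual A)) (Phi x) (Phi_rqc x).

Definition bwd (K : st (rqc (dual A))) : st (dual (ts A)) :=
  epsilon (inhabits (ts_bot A)) (fun x => Phi x = rqc_val (dual A) K).

Lemma fwd_morph : jdfa_morph (dual (ts A)) (rqc (dual A)) fwd.
Proof.
split; last split; last split; last split.
- move=> x y.
  have E : (fun w => rqc_val (dual A) (fwd x) w \/ rqc_val (dual A) (fwd y) w) =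
           rqc_val (dual A) (fwd (jn (dual (ts A)) x y)).
    by apply: lang_ext => w /=; rewrite Phi_meet.
  by rewrite /= E rqc_pick_val.
- apply: rqc_eq => /=; apply: lang_ext => w; exact: Phi_bot.
- move=> a x; symmetry; exact: (rqc_pick_val _ (fwd (delta (dual (ts A)) a x))).
- apply: rqc_eq => /=; apply: lang_ext => w; exact: Phi_init.
- by [].
Qed.

Lemma fwdK : cancel fwd bwd.
Proof.
move=> x; apply: Phi_ext => w.
have -> : Phi (bwd (fwd x)) = Phi x.
  unfold bwd; apply (epsilon_spec (inhabits (ts_bot A)) (fun y => Phi y = rqc_val (dual A) (fwd x))).
  by exists x.
by [].
Qed.

Lemma bwdK : cancel bwd fwd.
Proof.
move=> K; apply: rqc_eq => /=.
unfold bwd; apply (epsilon_spec (inhabits (ts_bot A)) (fun y => Phi y = rqc_val (dual A) K)).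
have [x Hx] := Phi_surj _ (proj2_sig K).
by exists x; apply: lang_ext.
Qed.

End Main.

Theorem proposition3p14 (Sigma : finType) (A : jdfa Sigma) :
  is_jsl_dfa A -> reachable A -> jdfa_iso (dual (ts A)) (rqc (dual A)).
Proof.
move=> HA HR.
exists (fwd A HA HR), (bwd A).
have fm := fwd_morph A HA HR.
have fK := fwdK A HA HR.
have gK := bwdK A HA HR.
split=> //; split=> //.
exact: morph_inv fm fK gK.
Qed.
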